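(* Let $A,C>0$ be given constants and let $r>0$ be a fixed constant. For $N$ sufficiently large the following holds: for any $x\in I_W$ there does not exist a real number $D$ with $r\le D\le N^{A}$ such that \[\sum_{i=1}^n\|D\,b_i(x)\|_{\mathbb R/\mathbb Z}^2\le C\log N.\]
   Context: Let $0<c_1<c_2$ be constants, $n$ a large integer and $M$ a large parameter (possibly growing with $n$) with $I_W:=[c_1M,c_2M]\subset[0,\sqrt n-M]$; set $N:=M$. For $x>0$ and $1\le i\le n$ let $b_i(x)=\sqrt N\,e^{-x^2/2}\,x^i/\sqrt{i!}$. For $t\in\mathbb R$, $\|t\|_{\mathbb R/\mathbb Z}$ denotes the distance from $t$ to the nearest integer. *)

(* Defs.v *)
From Stdlib Require Import Reals Lra List Factorial.
Open Scope R_scope.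

Definition frac_part (t : R) : R := t - IZR (Int_part t).
Definition distZ (t : R) : R := Rmin (frac_part t) (1 - frac_part t).

Definition b (N : R) (i : nat) (x : R) : R :=
  sqrt N * exp (- x ^ 2 / 2) * x ^ i / sqrt (INR (fact i)).

Definition sum1n (n : nat) (f : nat -> R) : R :=
  fold_right Rplus 0 (map f (seq 1 n)).

(* Main.v *)
Require Import Defs.
From Stdlib Require Import Reals Lra Lia Factorial List ZArith.
From Coquelicot Require Coquelicot.
Open Scope R_scope.

Module Aux.
Import Coquelicot.Coquelicot.
Lemma ln1p_lb : forall t, 0 <= t -> 2*t/(2+t) <= ln (1+t).
Proof.
  intros t Ht. destruct (Req_dec t 0) as [->|Hn].
  { replace (1+0) with 1 by ring. rewrite ln_1. unfold Rdiv. lra. }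
  set (g := fun u => ln (1+u) - 2*u/(2+u)).
  set (g' := fun u => /(1+u) - 4/((2+u)^2)).
  assert (Hd : forall c, 0 <= c <= t -> derivable_pt_lim g c (g' c)).
  { intros c Hc. apply is_derive_Reals. unfold g, g'.
    auto_derive.
    - repeat split; lra.
    - field; lra. }
  destruct (MVT_cor2 g g' 0 t ltac:(lra) Hd) as [c [Hc1 Hc2]].
  assert (Hg0 : g 0 = 0).
  { unfold g. replace (1+0) with 1 by ring. rewrite ln_1. field. }
  assert (Hgc : 0 <= g' c).
  { unfold g'. assert (0 < 1 + c) by lra. assert (0 < 2 + c) by lra.
    replace (/ (1 + c) - 4 / (2 + c) ^ 2) with (c^2 / ((1+c)*(2+c)^2)) by (field; lra).
    apply Rle_mult_inv_pos. nra. apply Rmult_lt_0_compat; nra. }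
  assert (0 <= g t) by nra.
  unfold g in H. lra.
Qed.
End Aux.
Notation ln1p_lb := Aux.ln1p_lb.


Lemma exp_pow_n : forall a n, exp a ^ n = exp (INR n * a).
Proof.
  intros a n; induction n.
  - simpl. rewrite Rmult_0_l, exp_0. ring.
  - rewrite S_INR. simpl. rewrite IHn, <- exp_plus. f_equal. ring.
Qed.

Lemma sqrt_exp : forall y, 0 < y -> sqrt y = exp (ln y / 2).
Proof.
  intros y Hy. apply sqrt_lem_1. lra. left; apply exp_pos.
  rewrite <- exp_plus. replace (ln y / 2 + ln y / 2) with (ln y) by field.
  apply exp_ln; auto.
Qed.

Lemma exp_le : forall x y, x <= y -> exp x <= exp y.
Proof. intros x y [H|H]. left; apply exp_increasing; auto. subst; lra. Qed.

Lemma INR_fact_S : forall i, INR (fact (S i)) = INR (S i) * INR (fact i).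
Proof. intros. change (fact (S i)) with (S i * fact i)%nat. rewrite mult_INR; reflexivity. Qed.

Lemma step_up : forall i:nat, (1 <= i)%nat ->
  exp 1 * (INR i ^ i * sqrt (INR i)) <= INR (S i) ^ i * sqrt (INR (S i)).
Proof.
  intros i Hi.
  assert (Hip : 0 < INR i) by (apply lt_0_INR; lia).
  set (y := INR (S i) / INR i).
  assert (Hy : INR (S i) = INR i * y) by (unfold y; field; lra).
  assert (Hiv : 0 < / INR i) by (apply Rinv_0_lt_compat; lra).
  assert (Hy1 : y = 1 + / INR i) by (unfold y; rewrite S_INR; field; lra).
  assert (Hyp : 0 < y) by lra.
  rewrite Hy, Rpow_mult_distr, sqrt_mult by lra.
  replace (INR i ^ i * y ^ i * (sqrt (INR i) * sqrt y)) with
     ((INR i ^ i * sqrt (INR i)) * (y ^ i * sqrt y)) by ring.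
  rewrite (Rmult_comm (exp 1)).
  apply Rmult_le_compat_l.
  { apply Rmult_le_pos. apply pow_le; lra. apply sqrt_pos. }
  rewrite sqrt_exp by lra.
  rewrite <- (exp_ln y) at 1 by lra. rewrite exp_pow_n, <- exp_plus.
  apply exp_le.
  pose proof (ln1p_lb (/ INR i) ltac:(lra)) as HL. rewrite <- Hy1 in HL.
  replace (2 * / INR i / (2 + / INR i)) with (2 / (2 * INR i + 1)) in HL by (field; lra).
  assert (HH: 1 <= (INR i + / 2) * (2 / (2 * INR i + 1))) by (right; field; lra).
  assert (INR i * ln y + ln y / 2 = (INR i + /2) * ln y) by field.
  rewrite H. eapply Rle_trans. apply HH. apply Rmult_le_compat_l; lra.
Qed.

Lemma stirling_up : forall i:nat, (1 <= i)%nat ->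
  INR (fact i) * exp (INR i) <= exp 1 * (INR i ^ i * sqrt (INR i)).
Proof.
  induction i as [|i IH]; intros Hi. lia.
  destruct (Nat.eq_dec i 0) as [->|Hn].
  - simpl. rewrite sqrt_1. lra.
  - specialize (IH ltac:(lia)).
    rewrite INR_fact_S.
    replace (exp (INR (S i))) with (exp (INR i) * exp 1) by (rewrite S_INR, exp_plus; ring).
    pose proof (step_up i ltac:(lia)) as Hs.
    assert (Hsp : 0 < INR (S i)) by (apply lt_0_INR; lia).
    assert (He : 0 < exp 1) by apply exp_pos.
    replace (INR (S i) * INR (fact i) * (exp (INR i) * exp 1)) with
      (INR (S i) * exp 1 * (INR (fact i) * exp (INR i))) by ring.
    replace (INR (S i) ^ S i) with (INR (S i) * INR (S i) ^ i) by (simpl; ring).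
    apply Rle_trans with (INR (S i) * exp 1 * (exp 1 * (INR i ^ i * sqrt (INR i)))).
    + apply Rmult_le_compat_l; [nra|exact IH].
    + replace (exp 1 * (INR (S i) * INR (S i) ^ i * sqrt (INR (S i)))) with
        (INR (S i) * exp 1 * (INR (S i) ^ i * sqrt (INR (S i)))) by ring.
      apply Rmult_le_compat_l; [nra|exact Hs].
Qed.

Lemma step_lo : forall i:nat, INR (S i) ^ i <= exp 1 * INR i ^ i.
Proof.
  intros i. destruct (Nat.eq_dec i 0) as [->|Hn]. simpl. pose proof (exp_ineq1_le 1). lra.
  assert (Hip : 0 < INR i) by (apply lt_0_INR; lia).
  replace (INR (S i)) with (INR i * (1 + / INR i)) by (rewrite S_INR; field; lra).
  rewrite Rpow_mult_distr, (Rmult_comm (exp 1)). apply Rmult_le_compat_l. apply pow_le; lra.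
  apply Rle_trans with (exp (/ INR i) ^ i).
  apply pow_incr. split. assert (0 < / INR i) by (apply Rinv_0_lt_compat; lra). lra. apply exp_ineq1_le.
  rewrite exp_pow_n. right. f_equal. field. lra.
Qed.

Lemma fact_lb : forall i:nat, INR i ^ i <= exp (INR i) * INR (fact i).
Proof.
  induction i as [|i IH]. simpl. rewrite exp_0. lra.
  rewrite INR_fact_S.
  replace (exp (INR (S i))) with (exp (INR i) * exp 1) by (rewrite S_INR, exp_plus; ring).
  replace (INR (S i) ^ S i) with (INR (S i) * INR (S i) ^ i) by (simpl; ring).
  assert (Hsp : 0 < INR (S i)) by (apply lt_0_INR; lia).
  pose proof (step_lo i).
  assert (0 < exp 1) by apply exp_pos.
  apply Rle_trans with (INR (S i) * (exp 1 * INR i ^ i)).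
  apply Rmult_le_compat_l; lra.
  replace (exp (INR i) * exp 1 * (INR (S i) * INR (fact i))) with (INR (S i) * (exp 1 * (exp (INR i) * INR (fact i)))) by ring.
  apply Rmult_le_compat_l. lra. apply Rmult_le_compat_l; lra.
Qed.

Lemma pois_up : forall (y : R) (i : nat), (1 <= i)%nat -> 0 <= y ->
  y ^ i <= exp y * INR (fact i).
Proof.
  intros y i Hi Hy.
  assert (Hip : 0 < INR i) by (apply lt_0_INR; lia).
  replace y with (INR i * (1 + (y - INR i) / INR i)) at 1 by (field; lra).
  rewrite Rpow_mult_distr.
  apply Rle_trans with (INR i ^ i * exp (y - INR i)).
  - apply Rmult_le_compat_l. apply pow_le; lra.
    apply Rle_trans with (exp ((y - INR i) / INR i) ^ i).
    apply pow_incr. split.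
    assert (0 <= y / INR i) by (unfold Rdiv; apply Rmult_le_pos; [lra|left; apply Rinv_0_lt_compat; lra]).
    replace (1 + (y - INR i) / INR i) with (y / INR i) by (field; lra). lra.
    apply exp_ineq1_le.
    rewrite exp_pow_n. right. f_equal. field. lra.
  - pose proof (fact_lb i).
    replace (exp y) with (exp (INR i) * exp (y - INR i)) by (rewrite <- exp_plus; f_equal; ring).
    pose proof (exp_pos (y - INR i)). nra.
Qed.

Lemma pois_lo : forall (y : R) (i : nat), (1 <= i)%nat -> INR i <= y < INR i + 1 ->
  INR (fact i) * exp y <= exp 2 * (y ^ i * sqrt y).
Proof.
  intros y i Hi Hy.
  pose proof (stirling_up i Hi) as S.
  assert (Hip : 0 < INR i) by (apply lt_0_INR; lia).
  assert (H1 : INR i ^ i * sqrt (INR i) <= y ^ i * sqrt y).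
  { apply Rmult_le_compat. apply pow_le; lra. apply sqrt_pos.
    apply pow_incr; lra. apply sqrt_le_1; lra. }
  assert (H2 : exp y <= exp (INR i) * exp 1) by (rewrite <- exp_plus; apply exp_le; lra).
  replace (exp 2) with (exp 1 * exp 1) by (rewrite <- exp_plus; f_equal; ring).
  pose proof (INR_fact_lt_0 i). pose proof (exp_pos 1). pose proof (exp_pos (INR i)).
  apply Rle_trans with (INR (fact i) * (exp (INR i) * exp 1)).
  apply Rmult_le_compat_l; lra.
  apply Rle_trans with (exp 1 * (INR i ^ i * sqrt (INR i)) * exp 1). nra.
  nra.
Qed.

Lemma b_S : forall N i x, b N (S i) x = b N i x * x / sqrt (INR (S i)).
Proof.
  intros. unfold b. rewrite INR_fact_S, sqrt_mult.
  2: apply pos_INR. 2: left; apply INR_fact_lt_0.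
  pose proof (INR_fact_lt_0 i). pose proof (sqrt_lt_R0 _ H).
  assert (0 < INR (S i)) by (apply lt_0_INR; lia). pose proof (sqrt_lt_R0 _ H1).
  simpl pow. field. split; lra.
Qed.

Lemma b_pos : forall N i x, 0 < N -> 0 < x -> 0 < b N i x.
Proof.
  intros. unfold b. pose proof (INR_fact_lt_0 i). pose proof (sqrt_lt_R0 _ H1).
  pose proof (sqrt_lt_R0 _ H). pose proof (exp_pos (- x^2/2)). pose proof (pow_lt x i H0).
  apply Rmult_lt_0_compat. 2: apply Rinv_0_lt_compat; lra.
  repeat apply Rmult_lt_0_compat; lra.
Qed.

Lemma b_sq : forall D N i x, 0 <= N ->
  (D * b N i x)^2 = D^2 * N * exp (-(x^2)) * (x^2)^i / INR (fact i).
Proof.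
  intros. unfold b. pose proof (INR_fact_lt_0 i). pose proof (sqrt_lt_R0 _ H0).
  assert (E1 : exp (- x^2/2) ^ 2 = exp (-(x^2))) by (rewrite exp_pow_n; f_equal; simpl; field).
  assert (E2 : sqrt N ^ 2 = N) by (apply pow2_sqrt; auto).
  assert (E3 : sqrt (INR (fact i)) ^ 2 = INR (fact i)) by (apply pow2_sqrt; lra).
  rewrite <- pow_mult, Nat.mul_comm, pow_mult.
  replace ((D * (sqrt N * exp (- x ^ 2 / 2) * x ^ i / sqrt (INR (fact i)))) ^ 2) with
    (D^2 * sqrt N ^ 2 * exp (- x ^ 2 / 2) ^ 2 * (x ^ i)^2 / sqrt (INR (fact i)) ^ 2) by (field; lra).
  rewrite E1, E2, E3. reflexivity.
Qed.

Lemma distZ_lb : forall t d, 0 <= t < 1 -> d <= t -> d <= 1 - t -> d <= distZ t.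
Proof.
  intros t d Ht H1 H2. unfold distZ, Defs.frac_part.
  assert (Int_part t = 0%Z).
  { symmetry. apply (Int_part_frac_part_spec t 0 t). auto. simpl; ring. }
  rewrite H. simpl. unfold Rmin. destruct Rle_dec; lra.
Qed.

Lemma sum_lb_aux : forall (h : nat -> R) d len start a m,
  (forall i, 0 <= h i) -> (start <= a)%nat -> (a + m <= start + len)%nat ->
  (forall j, (j < m)%nat -> d <= h (a + j)%nat) -> 0 <= d ->
  INR m * d <= fold_right Rplus 0 (map h (seq start len)).
Proof.
  intros h d len. induction len as [|len IH]; intros start a m Hh Ha Hm Hj Hd.
  - assert (m = 0%nat) by lia. subst. simpl. lra.
  - simpl. destruct (Nat.eq_dec a start) as [->|Hne].
    + destruct m as [|m].
      * simpl. rewrite Rmult_0_l. pose proof (IH (S start) (S start) 0%nat Hh ltac:(lia) ltac:(lia) ltac:(intros; lia) Hd).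
        simpl in H. pose proof (Hh start). lra.
      * rewrite S_INR. pose proof (Hj 0%nat ltac:(lia)). rewrite Nat.add_0_r in H.
        pose proof (IH (S start) (S start) m Hh ltac:(lia) ltac:(lia)).
        assert (INR m * d <= fold_right Rplus 0 (map h (seq (S start) len))).
        { apply H0; auto. intros j Hj'. replace (S start + j)%nat with (start + S j)%nat by lia. apply Hj. lia. }
        lra.
    + pose proof (IH (S start) a m Hh ltac:(lia) ltac:(lia) Hj Hd). pose proof (Hh start). lra.
Qed.

Lemma sum_lb : forall (h : nat -> R) d n a m,
  (forall i, 0 <= h i) -> (1 <= a)%nat -> (a + m <= n + 1)%nat ->
  (forall j, (j < m)%nat -> d <= h (a + j)%nat) -> 0 <= d ->
  INR m * d <= sum1n n h.
Proof. intros. unfold sum1n. eapply sum_lb_aux; eauto. lia. Qed.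

Lemma disc_ivt : forall (P : nat -> Prop), (forall k, P k \/ ~ P k) ->
  forall K, P 0%nat -> ~ P K -> exists k, (k < K)%nat /\ P k /\ ~ P (S k).
Proof.
  intros P dec K. induction K; intros H0 HK. contradiction.
  destruct (dec K) as [HP|HP]. exists K. split; [lia|auto].
  destruct (IHK H0 HP) as [k [? ?]]. exists k. split; [lia|auto].
Qed.

Lemma ratio_lo : forall D N x i T, 0 < D -> 0 < N -> 0 < x ->
  INR i + 1 <= x^2 + T -> 0 <= T <= x^2 ->
  (1 - T / x^2) * (D * b N i x) <= D * b N (S i) x.
Proof.
  intros D N x i T HD HN Hx Hi HT.
  set (e := T / x^2).
  assert (Hx2 : 0 < x^2) by (apply pow_lt; auto).
  assert (He : 0 <= e <= 1).
  { unfold e. split. apply Rmult_le_pos; [lra|left; apply Rinv_0_lt_compat; lra].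
    apply Rmult_le_reg_r with (x^2); auto. unfold Rdiv. rewrite Rmult_assoc, Rinv_l; lra. }
  assert (HT' : T = e * x^2) by (unfold e; field; lra).
  pose proof (b_pos N i x HN Hx) as Hb.
  assert (Hs : 0 < INR (S i)) by (apply lt_0_INR; lia).
  pose proof (sqrt_lt_R0 _ Hs) as Hsq.
  assert (Key : (1 - e) * sqrt (INR (S i)) <= x).
  { rewrite <- (sqrt_pow2 (1 - e)) by lra. rewrite <- sqrt_mult by (try apply pow2_ge_0; lra).
    rewrite <- (sqrt_pow2 x) by lra. apply sqrt_le_1. apply Rmult_le_pos. apply pow2_ge_0. lra.
    apply pow2_ge_0. rewrite S_INR.
    apply Rle_trans with ((1-e)^2 * (x^2 + T)). apply Rmult_le_compat_l. apply pow2_ge_0. lra.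
    rewrite HT'. assert (0 <= e*e) by nra.
    replace ((1 - e) ^ 2 * (x ^ 2 + e * x ^ 2)) with (x^2 * ((1-e)*(1 - e*e))) by ring.
    assert ((1-e)*(1-e*e) <= 1) by nra. nra. }
  rewrite b_S. fold e.
  replace (D * (b N i x * x / sqrt (INR (S i)))) with ((D * b N i x) * (x / sqrt (INR (S i)))) by (field; lra).
  rewrite Rmult_comm. apply Rmult_le_compat_l. nra.
  apply Rmult_le_reg_r with (sqrt (INR (S i))); auto. unfold Rdiv. rewrite Rmult_assoc, Rinv_l; lra.
Qed.

Lemma ratio_up : forall D N x i T, 0 < D -> 0 < N -> 0 < x ->
  x^2 + T <= INR i + 1 -> 0 <= T ->
  D * b N (S i) x <= (x / sqrt (x^2 + T)) * (D * b N i x).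
Proof.
  intros D N x i T HD HN Hx Hi HT.
  assert (Hx2 : 0 < x^2) by (apply pow_lt; auto).
  pose proof (b_pos N i x HN Hx) as Hb.
  assert (Hs : 0 < INR (S i)) by (apply lt_0_INR; lia).
  pose proof (sqrt_lt_R0 _ Hs) as Hsq.
  assert (Hs2 : 0 < sqrt (x^2+T)) by (apply sqrt_lt_R0; lra).
  assert (sqrt (x^2+T) <= sqrt (INR (S i))) by (apply sqrt_le_1; try lra; rewrite S_INR; lra).
  rewrite b_S.
  replace (D * (b N i x * x / sqrt (INR (S i)))) with ((D * b N i x * x) * / sqrt (INR (S i))) by (field; lra).
  replace (x / sqrt (x ^ 2 + T) * (D * b N i x)) with ((D * b N i x * x) * / sqrt (x^2+T)) by (field; lra).
  apply Rmult_le_compat_l. assert (0 < D * b N i x) by nra. nra.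
  apply Rinv_le_contravar; auto.
Qed.

Lemma floor_nat : forall y, 0 <= y -> exists k : nat, INR k <= y < INR k + 1.
Proof.
  intros y Hy. destruct (base_Int_part y) as [H1 H2].
  assert (Hz : (0 <= Int_part y)%Z).
  { assert (IZR (-1) < IZR (Int_part y)) by (simpl; lra). apply lt_IZR in H. lia. }
  exists (Z.to_nat (Int_part y)). rewrite INR_IZR_INZ, Z2Nat.id by auto. lra.
Qed.

Lemma exp4_gt : 16 < exp 4.
Proof.
  pose proof (exp_ineq1 1 ltac:(lra)).
  replace 4 with (INR 4 * 1) by (simpl; ring). rewrite <- exp_pow_n.
  simpl. assert (2 < exp 1) by lra. set (e := exp 1) in *. assert (4 < e*e) by nra. assert (16 < (e*e)*(e*e)) by nra. nra.
Qed.

Lemma mono_from : forall D N x i0, 0 < D -> 0 < N -> 0 < x -> x^2 < INR i0 + 1 ->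
  forall k j, D * b N (i0 + k + j) x <= D * b N (i0 + k) x.
Proof.
  intros D N x i0 HD HN Hx Hi k j. induction j.
  - rewrite Nat.add_0_r. lra.
  - replace (i0 + k + S j)%nat with (S (i0 + k + j)) by lia.
    eapply Rle_trans. apply (ratio_up D N x _ 0); auto; try lra.
    rewrite !plus_INR. pose proof (pos_INR k). pose proof (pos_INR j). lra.
    rewrite Rplus_0_r, sqrt_pow2 by lra. replace (x / x) with 1 by (field; lra). lra.
Qed.

Lemma case1 : forall c2 C r D M x n (i0:nat) L mu,
 0 < c2 -> 0 < r -> 1 <= M -> x <= c2*M -> r <= D -> 2 <= x ->
 INR i0 <= x^2 < INR i0 + 1 -> (1 <= i0)%nat -> (x+M)^2 <= INR n ->
 mu = Rmin (r^2*exp(-2)/(4*c2)) (1/16) ->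
 C*L < x*mu/2 ->
 D * b M i0 x < 3/4 ->
 sum1n n (fun i => (distZ (D*b M i x))^2) <= C*L -> False.
Proof.
  intros c2 C r D M x n i0 L mu Hc2 Hr HM1 Hxc HD Hx2 Hi0 Hi01 Hn Hmu HCL HF Hsum.
  assert (Hx : 0 < x) by lra. assert (HD0 : 0 < D) by lra. assert (HM : 0 < M) by lra.
  set (f := fun k => D * b M k x) in *.
  set (F := f i0) in *. assert (HF3 : F < 3/4) by exact HF. clear HF.
  assert (HFp : 0 < F) by (unfold F, f; pose proof (b_pos M i0 x HM Hx); nra).
  assert (HF2 : r^2 * exp (-2) / c2 <= F^2).
  { unfold F, f. rewrite b_sq by lra.
    pose proof (pois_lo (x^2) i0 Hi01 Hi0) as P.
    rewrite sqrt_pow2 in P by lra.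
    pose proof (INR_fact_lt_0 i0) as Hf.
    assert (Hl : 0 < (x^2)^i0) by (apply pow_lt; nra).
    set (P0 := (x^2)^i0) in *. set (Q := INR (fact i0)) in *.
    assert (E: exp (-(x^2)) * exp (x^2) = 1) by (rewrite <- exp_plus; replace (-(x^2) + x^2) with 0 by ring; apply exp_0).
    assert (E2: exp (-2) * exp 2 = 1) by (rewrite <- exp_plus; replace (-2 + 2) with 0 by ring; apply exp_0).
    pose proof (exp_pos (-(x^2))). pose proof (exp_pos (x^2)). pose proof (exp_pos 2). pose proof (exp_pos (-2)).
    assert (G1 : exp (-2) / x <= exp (-(x^2)) * P0 / Q).
    { apply Rmult_le_reg_r with (Q * x * exp 2 * exp (x^2)).
      repeat apply Rmult_lt_0_compat; lra.
      replace (exp (-2) / x * (Q * x * exp 2 * exp (x ^ 2))) with (Q * exp (x^2) * (exp (-2) * exp 2)) by (field; lra).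
      replace (exp (- x ^ 2) * P0 / Q * (Q * x * exp 2 * exp (x ^ 2))) with (exp 2 * (P0 * x) * (exp (-(x^2)) * exp (x^2))) by (field; lra).
      rewrite E, E2. lra. }
    assert (G2 : r^2 <= D^2) by (apply pow_incr; lra).
    assert (G3 : /(c2*M) <= /x) by (apply Rinv_le_contravar; lra).
    apply Rle_trans with (D^2 * M * (exp (-2) / x)).
    - replace (r ^ 2 * exp (-2) / c2) with (r^2 * M * (exp (-2) * / (c2 * M))) by (field; lra).
      unfold Rdiv. apply Rmult_le_compat. nra. pose proof (Rinv_0_lt_compat (c2*M)). nra. nra.
      apply Rmult_le_compat_l; lra.
    - replace (D ^ 2 * M * exp (- x ^ 2) * P0 / Q) with (D^2 * M * (exp (-(x^2)) * P0 / Q)) by (field; lra).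
      apply Rmult_le_compat_l. nra. exact G1. }
  set (dl := Rmin (F/2) (1/4)).
  assert (Hdl : mu <= dl^2 /\ 0 <= dl).
  { assert (M1 : mu <= r ^ 2 * exp (-2) / (4 * c2)) by (rewrite Hmu; apply Rmin_l).
    assert (M2 : mu <= 1/16) by (rewrite Hmu; apply Rmin_r).
    replace (r ^ 2 * exp (-2) / (4 * c2)) with ((r ^ 2 * exp (-2) / c2)/4) in M1 by (field; lra).
    unfold dl, Rmin. destruct (Rle_dec (F/2) (1/4)); split; try lra.
    all: try (replace ((F/2)^2) with (F^2/4) by field; lra). }
  destruct (floor_nat (x/2) ltac:(lra)) as [K HK].
  set (e := INR K / x^2).
  assert (Hx2p : 0 < x^2) by nra.
  assert (He : 0 <= e /\ INR K * e <= 1/4).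
  { unfold e. pose proof (pos_INR K). split. apply Rmult_le_pos; [lra|left; apply Rinv_0_lt_compat; lra].
    apply Rmult_le_reg_r with (x^2); auto. replace (INR K * (INR K / x ^ 2) * x ^ 2) with (INR K * INR K) by (field; lra). nra. }
  assert (Hwin : forall j, (j <= K)%nat -> F - INR j * e * F <= f (i0 + j)%nat /\ f (i0 + j)%nat <= F).
  { induction j; intros Hj.
    - rewrite Nat.add_0_r. change (f i0) with F. simpl INR. split; lra.
    - destruct (IHj ltac:(lia)) as [IH1 IH2]. split.
      + replace (i0 + S j)%nat with (S (i0 + j)) by lia.
        pose proof (ratio_lo D M x (i0 + j) (INR K) HD0 HM Hx) as R.
        assert (Hjk : INR (S j) <= INR K) by (apply le_INR; lia).
        rewrite S_INR in Hjk. rewrite plus_INR in R.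
        assert (0 <= INR K <= x^2) by (split; [apply pos_INR|nra]).
        specialize (R ltac:(lra) H). fold e in R. unfold f. rewrite S_INR.
        assert (0 < f (i0+j)%nat) by (unfold f; pose proof (b_pos M (i0+j) x HM Hx); nra).
        unfold f in IH1, IH2, H0. nra.
      + pose proof (mono_from D M x i0 HD0 HM Hx ltac:(lra) 0 (S j)). rewrite Nat.add_0_r in H. exact H. }
  assert (Hterm : forall j, (j < S K)%nat -> mu <= (distZ (f (i0 + j)%nat))^2).
  { intros j Hj. destruct (Hwin j ltac:(lia)) as [W1 W2].
    assert (INR j * e <= 1/4).
    { apply Rle_trans with (INR K * e). apply Rmult_le_compat_r. lra. apply le_INR; lia. lra. }
    assert (0 < f (i0+j)%nat) by (unfold f; pose proof (b_pos M (i0+j) x HM Hx); nra).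
    assert (dl <= distZ (f (i0 + j)%nat)).
    { apply distZ_lb. lra. unfold dl. apply Rle_trans with (F/2). apply Rmin_l. assert (INR j * e * F <= 1/4 * F) by (apply Rmult_le_compat_r; lra). lra.
      unfold dl. apply Rle_trans with (1/4). apply Rmin_r. lra. }
    apply Rle_trans with (dl^2). lra. apply pow_incr. lra. }
  assert (Hidx : (i0 + S K <= n + 1)%nat).
  { apply INR_le. rewrite !plus_INR, S_INR. simpl INR at 3.
    assert (INR i0 + INR K <= INR n). { assert (x/2 <= 2*x*M) by nra. assert ((x+M)^2 = x^2 + 2*x*M + M^2) by ring. assert (0 <= M^2) by nra. lra. } simpl INR. lra. }
  pose proof (sum_lb (fun i => (distZ (D * b M i x))^2) mu n i0 (S K)
     ltac:(intros; apply pow2_ge_0) ltac:(lia) Hidx Hterm) as S.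
  assert (0 <= mu).
  { rewrite Hmu. unfold Rmin. destruct Rle_dec. pose proof (exp_pos (-2)).
    unfold Rdiv. apply Rmult_le_pos. nra. left; apply Rinv_0_lt_compat; lra. lra. }
  specialize (S H). rewrite S_INR in S.
  assert (x/2 * mu <= (INR K + 1) * mu) by (apply Rmult_le_compat_r; lra).
  lra.
Qed.

Lemma case2 : forall A C D M x n (i0:nat) L al,
 1 <= M -> L = ln M -> 0 < D -> D <= exp (A*L) -> 1 <= L -> 2 <= x -> L + 1 <= x ->
 (2*A+1)*L + 4*L <= L^2/2 -> al = 16*C+1 ->
 2*al*(5+al)*L^2 <= x -> (4+al)*L <= 2*M -> 0 < C ->
 INR i0 <= x^2 < INR i0 + 1 -> (1 <= i0)%nat -> (x+M)^2 <= INR n ->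
 3/4 <= D * b M i0 x ->
 sum1n n (fun i => (distZ (D*b M i x))^2) <= C*L -> False.
Proof.
  intros A C D M x n i0 L al HM1 HL HD0 HDA HL1 Hx2 HxL HAL Hal Hiii Hiv HC Hi0 Hi01 Hn HF Hsum.
  assert (Hx : 0 < x) by lra. assert (HM : 0 < M) by lra.
  assert (Hlam : 0 < x^2) by nra.
  set (f := fun k => D * b M k x) in *.
  set (F := f i0) in *. assert (HF3 : 3/4 <= F) by exact HF. clear HF.
  assert (fpos : forall k, 0 < f k) by (intro k; unfold f; pose proof (b_pos M k x HM Hx); nra).
  assert (HF2 : F^2 <= exp ((2*A+1)*L)).
  { unfold F, f. rewrite b_sq by lra.
    pose proof (pois_up (x^2) i0 Hi01 ltac:(lra)) as P.
    pose proof (INR_fact_lt_0 i0) as Hf.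
    assert (E: exp (-(x^2)) * exp (x^2) = 1) by (rewrite <- exp_plus; replace (-(x^2) + x^2) with 0 by ring; apply exp_0).
    pose proof (exp_pos (-(x^2))).
    assert (G1 : exp (-(x^2)) * (x^2)^i0 / INR (fact i0) <= 1).
    { apply Rmult_le_reg_r with (INR (fact i0)); auto.
      replace (exp (-(x^2)) * (x^2)^i0 / INR (fact i0) * INR (fact i0)) with (exp (-(x^2)) * (x^2)^i0) by (field; lra).
      apply Rle_trans with (exp (-(x^2)) * (exp (x^2) * INR (fact i0))). apply Rmult_le_compat_l; lra.
      rewrite <- Rmult_assoc, E. lra. }
    assert (G2 : D^2 <= exp (2*A*L)).
    { replace (2*A*L) with (INR 2 * (A*L)) by (simpl; ring). rewrite <- exp_pow_n. apply pow_incr. lra. }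
    assert (G3 : M = exp L) by (rewrite HL, exp_ln; lra).
    replace (exp ((2*A+1)*L)) with (exp (2*A*L) * M * 1) by (rewrite G3, <- exp_plus, Rmult_1_r; f_equal; ring).
    replace (D ^ 2 * M * exp (- x ^ 2) * (x ^ 2) ^ i0 / INR (fact i0)) with
      (D^2 * M * (exp (- x ^ 2) * (x ^ 2) ^ i0 / INR (fact i0))) by (field; lra).
    assert (0 <= exp (- x ^ 2) * (x ^ 2) ^ i0 / INR (fact i0)).
    { unfold Rdiv. apply Rmult_le_pos. apply Rmult_le_pos. lra. apply pow_le; lra. left; apply Rinv_0_lt_compat; lra. }
    apply Rmult_le_compat; try lra. apply Rmult_le_pos. nra. lra. apply Rmult_le_compat_r; lra. }
  destruct (floor_nat (x*L) ltac:(nra)) as [k0 Hk0].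
  set (h := S k0).
  assert (Hh : x*L <= INR h <= x*L + 1) by (unfold h; rewrite S_INR; lra).
  assert (Hhl : INR h <= x^2) by nra.
  set (q := x / sqrt (x^2 + INR h)).
  assert (Hsq : 0 < sqrt (x^2 + INR h)) by (apply sqrt_lt_R0; nra).
  assert (Hq0 : 0 <= q) by (unfold q; unfold Rdiv; apply Rmult_le_pos; [lra|left; apply Rinv_0_lt_compat; lra]).
  assert (Hdec : forall j, f (i0 + h + j)%nat <= q^j * f (i0 + h)%nat).
  { induction j. rewrite Nat.add_0_r. simpl. lra.
    replace (i0 + h + S j)%nat with (S (i0 + h + j)) by lia.
    eapply Rle_trans. apply (ratio_up D M x _ (INR h)); auto.
    rewrite !plus_INR. pose proof (pos_INR j). lra. apply pos_INR.
    fold q. simpl pow. rewrite Rmult_assoc. apply Rmult_le_compat_l; auto. }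
  assert (Hend : f (i0 + 2*h)%nat < 1/4).
  { replace (i0 + 2*h)%nat with (i0 + h + h)%nat by lia.
    pose proof (Hdec h) as D1.
    pose proof (mono_from D M x i0 HD0 HM Hx ltac:(lra) 0 h) as D2. rewrite Nat.add_0_r in D2.
    fold f in D2. change (f i0) with F in D2.
    assert (D3 : f (i0 + h + h)%nat <= q^h * F) by (eapply Rle_trans; [exact D1|apply Rmult_le_compat_l; [apply pow_le; auto|exact D2]]).
    set (u := INR h / x^2).
    assert (Hu : 0 < u <= 1).
    { unfold u. split. apply Rdiv_lt_0_compat; [nra|lra]. apply Rmult_le_reg_r with (x^2); auto.
      unfold Rdiv. rewrite Rmult_assoc, Rinv_l; lra. }
    assert (Hq2 : q^2 = / (1 + u)).
    { unfold q, u. unfold Rdiv. rewrite Rpow_mult_distr, pow_inv, pow2_sqrt by nra. field. nra. }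
    assert (Hq2e : q^2 <= exp (- (u/2))).
    { rewrite Hq2. apply Rle_trans with (exp (- (u / (1+u)))).
      pose proof (exp_ineq1_le (- (u/(1+u)))). replace (1 + - (u / (1 + u))) with (/(1+u)) in H by (field; lra). lra.
      apply exp_le. apply Ropp_le_contravar. apply Rmult_le_reg_r with (2*(1+u)). lra.
      replace (u / 2 * (2 * (1 + u))) with (u * (1+u)) by field.
      replace (u / (1 + u) * (2 * (1 + u))) with (2*u) by (field; lra). nra. }
    assert (Hqh : (q^h)^2 <= exp (- (L^2/2))).
    { rewrite <- pow_mult, Nat.mul_comm, pow_mult.
      apply Rle_trans with (exp (- (u/2)) ^ h). apply pow_incr. split. apply pow2_ge_0. auto.
      rewrite exp_pow_n. apply exp_le.
      assert (INR h * u = INR h * INR h / x^2) by (unfold u; field; lra).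
      assert (L^2 <= INR h * INR h / x^2).
      { apply Rmult_le_reg_r with (x^2); auto. replace (INR h * INR h / x ^ 2 * x ^ 2) with (INR h * INR h) by (field; lra).
        assert (0 <= x * L) by nra. nra. }
      nra. }
    assert (Hfin : (f (i0 + h + h)%nat)^2 < (1/4)^2).
    { apply Rle_lt_trans with ((q^h * F)^2).
      apply pow_incr. split. left; apply fpos. auto.
      rewrite Rpow_mult_distr.
      apply Rle_lt_trans with (exp (- (L^2/2)) * exp ((2*A+1)*L)).
      apply Rmult_le_compat; auto. apply pow2_ge_0. apply pow2_ge_0.
      rewrite <- exp_plus. apply Rle_lt_trans with (exp (-4)). apply exp_le. lra.
      pose proof exp4_gt. assert (exp (-4) * exp 4 = 1) by (rewrite <- exp_plus; replace (-4+4) with 0 by ring; apply exp_0).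
      pose proof (exp_pos (-4)). nra. }
    pose proof (fpos (i0 + h + h)%nat). nra. }
  destruct (disc_ivt (fun k => 3/4 <= f (i0+k)%nat)
     ltac:(intro k; destruct (Rle_dec (3/4) (f (i0+k)%nat)); [left|right]; auto) (2*h)
     ltac:(cbv beta; rewrite Nat.add_0_r; exact HF3) ltac:(cbv beta; lra)) as [k [Hk [Pk nPk]]].
  destruct (floor_nat (16*C*L) ltac:(nra)) as [m0 Hm0].
  set (m := S m0).
  assert (Hm : 16*C*L < INR m <= al*L) by (unfold m; rewrite S_INR; split; nra).
  set (T2 := 2*INR h + INR m + 1).
  assert (HT2 : T2 <= (5+al)*x*L).
  { unfold T2. assert (1 <= x*L) by nra. assert (al*L <= al*x*L) by (assert (0 <= al*L) by nra; nra). nra. }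
  assert (Hal1 : 1 <= al) by lra.
  assert (HmT : INR m * T2 <= x^2/2).
  { apply Rle_trans with (al*L * ((5+al)*x*L)). apply Rmult_le_compat; try lra. apply pos_INR. unfold T2. pose proof (pos_INR h); pose proof (pos_INR m); lra.
    replace (al * L * ((5 + al) * x * L)) with (x * (al*(5+al)*L^2)) by ring.
    assert (al*(5+al)*L^2 <= x/2) by lra. nra. }
  assert (HT2x : T2 <= x^2).
  { assert ((5+al)*L <= 2 * al * (5 + al) * L ^ 2). { assert (0 <= (5+al)*L) by nra. assert (1 <= 2*al*L) by nra. nra. }
    assert ((5+al)*x*L <= x*x) by nra. nra. }
  set (e := T2 / x^2).
  assert (He : 0 <= e /\ INR m * e <= 1/2).
  { unfold e. split. unfold T2, Rdiv. apply Rmult_le_pos. pose proof (pos_INR h); pose proof (pos_INR m); lra. left; apply Rinv_0_lt_compat; lra.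
    apply Rmult_le_reg_r with (x^2); auto. replace (INR m * (T2 / x ^ 2) * x ^ 2) with (INR m * T2) by (field; lra). lra. }
  set (a := (i0 + k)%nat).
  assert (Hup : forall j, (1 <= j)%nat -> f (a + j)%nat < 3/4).
  { intros j Hj. replace (a + j)%nat with (i0 + S k + (j - 1))%nat by (unfold a; lia).
    pose proof (mono_from D M x i0 HD0 HM Hx ltac:(lra) (S k) (j-1)). fold f in H.
    assert (f (i0 + S k)%nat < 3/4) by (apply Rnot_le_lt; exact nPk). unfold f in *. lra. }
  assert (Hrat : forall j, (j < m)%nat -> (1 - e) * f (a + j)%nat <= f (a + S j)%nat).
  { intros j Hj. replace (a + S j)%nat with (S (a + j)) by lia. unfold f, e.
    apply ratio_lo; auto. 2: { split; [unfold T2; pose proof (pos_INR h); pose proof (pos_INR m); lra|exact HT2x]. }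
    unfold a. rewrite !plus_INR. fold T2.
    assert (INR k + 1 <= 2 * INR h). { assert (INR (S k) <= INR (2*h)) by (apply le_INR; lia). rewrite S_INR, mult_INR in H. replace (INR 2) with 2 in H by (simpl; ring). lra. }
    assert (INR j + 1 <= INR m) by (rewrite <- S_INR; apply le_INR; lia).
    unfold T2. lra. }
  assert (Hlo : forall j, (1 <= j <= m)%nat -> 3/4 - INR j * e <= f (a + j)%nat).
  { induction j; intros Hj. lia.
    destruct (Nat.eq_dec j 0) as [->|Hj0].
    - pose proof (Hrat 0%nat ltac:(lia)). rewrite Nat.add_0_r in H. change (f a) with (f (i0+k)%nat) in H.
      assert (Pk' : 3/4 <= f (i0+k)%nat) by exact Pk.
      assert (He1 : e <= 1/2). { assert (1 <= INR m) by (unfold m; rewrite S_INR; pose proof (pos_INR m0); lra). nra. }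
      assert ((1-e) * (3/4) <= (1-e) * f (i0+k)%nat) by (apply Rmult_le_compat_l; lra).
      replace (a+1)%nat with (a + S 0)%nat by lia. simpl INR. lra.
    - specialize (IHj ltac:(lia)). pose proof (Hrat j ltac:(lia)). pose proof (Hup j ltac:(lia)).
      pose proof (fpos (a + j)%nat). rewrite S_INR. assert (e * f (a+j)%nat <= e * 1) by (apply Rmult_le_compat_l; lra). lra. }
  assert (Hterm : forall j, (j < m)%nat -> 1/16 <= (distZ (D * b M (S a + j) x))^2).
  { intros j Hj. change (D * b M (S a + j) x) with (f (S a + j)%nat).
    replace (S a + j)%nat with (a + S j)%nat by lia.
    pose proof (Hlo (S j) ltac:(lia)). pose proof (Hup (S j) ltac:(lia)).
    assert (INR (S j) * e <= INR m * e) by (apply Rmult_le_compat_r; [lra|apply le_INR; lia]).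
    assert (1/4 <= distZ (f (a + S j)%nat)) by (apply distZ_lb; lra).
    replace (1/16) with ((1/4)^2) by field. apply pow_incr. lra. }
  assert (Hidx : (S a + m <= n + 1)%nat).
  { apply INR_le. unfold a. rewrite !plus_INR, S_INR. change (INR 1) with 1.
    assert (INR k <= 2 * INR h) by (assert (INR k <= INR (2*h)) by (apply le_INR; lia); rewrite mult_INR in H; replace (INR 2) with 2 in H by (simpl; ring); lra).
    assert (2*x*L + 2 + al*L <= 2*x*M).
    { assert (0 <= al*L) by (apply Rmult_le_pos; lra).
      assert (al*L <= x*(al*L)) by (assert (0 <= (x-1)*(al*L)) by (apply Rmult_le_pos; lra); lra).
      assert (1*1 <= x*L) by (apply Rmult_le_compat; lra).
      assert (x*((4+al)*L) <= x*(2*M)) by (apply Rmult_le_compat_l; lra).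
      lra. }
    assert ((x+M)^2 = x^2 + 2*x*M + M^2) by ring. assert (0 <= M*M) by (apply Rmult_le_pos; lra).
    replace (M^2) with (M*M) in H1 by ring. rewrite plus_INR. lra. }
  pose proof (sum_lb (fun i => (distZ (D * b M i x))^2) (1/16) n (S a) m
     ltac:(intros; apply pow2_ge_0) ltac:(lia) Hidx Hterm ltac:(lra)) as S.
  lra.
Qed.

Lemma ln_sqrt_half : forall y, 0 < y -> ln (sqrt y) = ln y / 2.
Proof.
  intros y Hy. pose proof (sqrt_lt_R0 y Hy).
  assert (ln (sqrt y * sqrt y) = ln (sqrt y) + ln (sqrt y)) by (apply ln_mult; auto).
  rewrite sqrt_sqrt in H0 by lra. lra.
Qed.

Lemma M_ge_L4 : forall M, 1 <= M -> (ln M)^4 / 256 <= M.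
Proof.
  intros M HM.
  set (s := sqrt (sqrt M)).
  assert (Hs1 : 0 < sqrt M) by (apply sqrt_lt_R0; lra).
  assert (Hs : 0 < s) by (apply sqrt_lt_R0; lra).
  assert (Hls : ln s = ln M / 4).
  { unfold s. rewrite ln_sqrt_half, ln_sqrt_half by lra. field. }
  assert (ln s <= s) by (pose proof (exp_ineq1_le (ln s)); rewrite exp_ln in H by lra; lra).
  assert (0 <= ln M) by (destruct (Req_dec M 1) as [->|]; [rewrite ln_1; lra| left; rewrite <- ln_1; apply ln_increasing; lra]).
  assert (s^4 = M).
  { unfold s. replace 4%nat with (2*2)%nat by lia. rewrite pow_mult, !pow2_sqrt; lra. }
  replace ((ln M)^4/256) with ((ln M / 4)^4) by field. rewrite <- Hls. rewrite <- H1.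
  apply pow_incr. lra.
Qed.

Theorem theorem3p4 :
  forall c1 c2 A C r : R,
    0 < c1 -> c1 < c2 -> 0 < A -> 0 < C -> 0 < r ->
    exists N0 : R,
      forall (n : nat) (M : R),
        N0 <= M ->
        c2 * M <= sqrt (INR n) - M ->
        forall x : R, c1 * M <= x <= c2 * M ->
        ~ (exists D : R, r <= D <= Rpower M A /\
             sum1n n (fun i => (distZ (D * b M i x)) ^ 2) <= C * ln M).
Proof.
  intros c1 c2 A C r Hc1 Hc12 HA HC Hr.
  set (mu := Rmin (r^2*exp(-2)/(4*c2)) (1/16)).
  assert (Hmu : 0 < mu).
  { unfold mu, Rmin. destruct Rle_dec; try lra. pose proof (exp_pos (-2)).
    unfold Rdiv. apply Rmult_lt_0_compat. apply Rmult_lt_0_compat. (timeout 10 nra). lra. apply Rinv_0_lt_compat; lra. }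
  set (al := 16*C+1).
  set (Q := 2 + 2*al*(5+al) + 2*C/mu + 1).
  assert (HQ1 : 2 + 2*al*(5+al) <= Q /\ 2*C/mu + 1 <= Q).
  { unfold Q. assert (0 <= 2*C/mu) by (unfold Rdiv; apply Rmult_le_pos; [lra|left; apply Rinv_0_lt_compat; lra]).
    assert (0 <= 2*al*(5+al)) by (unfold al; apply Rmult_le_pos; lra). lra. }
  set (T := 1 + (4*A+10) + 256*Q/c1 + 128*(4+al)).
  assert (HT : 1 <= T /\ 4*A+10 <= T /\ 256*Q/c1 <= T /\ 128*(4+al) <= T).
  { unfold T. assert (0 <= 256*Q/c1) by (unfold Rdiv; apply Rmult_le_pos; [assert (0 <= 2*al*(5+al)) by (unfold al; apply Rmult_le_pos; lra); destruct HQ1; lra|left; apply Rinv_0_lt_compat; lra]).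
    assert (0 <= 128*(4+al)) by (unfold al; lra). lra. }
  exists (exp T).
  intros n M HM Hsq x Hx [D [[HrD HDM] Hsum]].
  assert (HM0 : 0 < M) by (pose proof (exp_pos T); lra).
  set (L := ln M) in *.
  assert (HLT : T <= L).
  { destruct HM as [HM|HM]. left. rewrite <- (ln_exp T). apply ln_increasing; auto. apply exp_pos.
    unfold L. rewrite <- HM, ln_exp. lra. }
  assert (HL1 : 1 <= L) by lra.
  assert (HM1 : 1 <= M) by (assert (M = exp L) by (unfold L; rewrite exp_ln; lra); pose proof (exp_ineq1_le L); lra).
  pose proof (M_ge_L4 M HM1) as HM4. fold L in HM4.
  assert (HL3 : 0 < L^3) by (apply pow_lt; lra).
  assert (HxQ : Q * L^3 <= x).
  { assert (Q <= c1 * L / 256).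
    { destruct HT as [_ [_ [H3 _]]]. apply Rmult_le_reg_r with (256/c1). unfold Rdiv; apply Rmult_lt_0_compat; [lra|apply Rinv_0_lt_compat; lra].
      replace (c1 * L / 256 * (256 / c1)) with L by (field; lra). lra. }
    apply Rle_trans with (c1 * L / 256 * L^3). apply Rmult_le_compat_r; lra.
    apply Rle_trans with (c1 * M). replace (c1 * L / 256 * L ^ 3) with (c1 * (L^4/256)) by (unfold Rdiv; ring).
    apply Rmult_le_compat_l; lra. lra. }
  assert (HLL : 1 * 1 <= L * L) by (apply Rmult_le_compat; lra).
  assert (HL3L : L <= L^3).
  { replace (L^3) with (L * (L*L)) by ring. assert (L * 1 <= L * (L*L)) by (apply Rmult_le_compat_l; lra). lra. }
  assert (HL2L : L^2 <= L^3).
  { replace (L^3) with (L^2 * L) by ring. assert (L^2 * 1 <= L^2 * L) by (apply Rmult_le_compat_l; [apply pow2_ge_0|lra]). lra. }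
  assert (HL31 : 1 <= L^3) by lra.
  destruct HQ1 as [HQa HQb].
  assert (Hk0 : 0 <= 2*al*(5+al)) by (unfold al; apply Rmult_le_pos; lra).
  assert (HQL : Q * L^3 <= x) by exact HxQ.
  assert (Hx2 : 2 <= x).
  { assert (2 * 1 <= Q * L^3) by (apply Rmult_le_compat; lra). lra. }
  assert (HxL : L + 1 <= x).
  { assert (2 * L <= Q * L^3) by (apply Rmult_le_compat; lra). lra. }
  assert (HAL : (2*A+1)*L + 4*L <= L^2/2).
  { assert ((4*A+10)*L <= L*L) by (apply Rmult_le_compat_r; lra). replace (L^2) with (L*L) by ring. lra. }
  assert (Hiii : 2*al*(5+al)*L^2 <= x).
  { assert (2*al*(5+al)*L^2 <= Q * L^3) by (apply Rmult_le_compat; try lra; apply pow2_ge_0). lra. }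
  assert (Hiv : (4+al)*L <= 2*M).
  { assert (T/256 * L^3 <= M).
    { apply Rle_trans with (L^4/256). replace (L^4/256) with (L/256 * L^3) by (unfold Rdiv; ring). apply Rmult_le_compat_r; lra. lra. }
    destruct HT as [_ [_ [_ H4]]].
    assert ((4+al)/2 * L <= T/256 * L^3) by (apply Rmult_le_compat; unfold al in *; lra).
    lra. }
  assert (HCL : C*L < x*mu/2).
  { assert ((2*C/mu + 1) * L <= x).
    { assert ((2*C/mu + 1) * L <= Q * L^3) by (apply Rmult_le_compat; try lra; unfold Rdiv; assert (0 <= 2*C*/mu) by (apply Rmult_le_pos; [lra|left; apply Rinv_0_lt_compat; lra]); lra). lra. }
    assert ((2*C/mu + 1) * L * mu = 2*C*L + mu*L) by (field; lra).
    assert (0 < mu * L) by (apply Rmult_lt_0_compat; lra).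
    assert ((2*C/mu + 1) * L * mu <= x * mu) by (apply Rmult_le_compat_r; lra). lra. }
  assert (Hn : (x+M)^2 <= INR n).
  { assert (0 <= x + M <= sqrt (INR n)) by (timeout 10 nra).
    rewrite <- (pow2_sqrt (INR n)) by apply pos_INR. apply pow_incr. lra. }
  destruct (floor_nat (x^2) ltac:((timeout 10 nra))) as [i0 Hi0].
  assert (Hi01 : (1 <= i0)%nat).
  { assert (Hx4 : 2*2 <= x*x) by (apply Rmult_le_compat; lra). replace (x^2) with (x*x) in Hi0 by ring.
    destruct i0. simpl INR in Hi0. lra. lia. }
  assert (HD0 : 0 < D) by lra.
  assert (HDA : D <= exp (A*L)) by (unfold Rpower in HDM; unfold L; exact HDM).
  destruct (Rlt_le_dec (D * b M i0 x) (3/4)) as [Hlt|Hge].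
  - eapply (case1 c2 C r D M x n i0 L mu); eauto; lra.
  - eapply (case2 A C D M x n i0 L al); eauto; lra.
Qed.
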